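(* For any $C^\infty$-ring $A$ and ideal $I\le A$ there are inclusions $\sqrt I\subseteq\sqrt[\infty]{I}\subseteq J(I)\subseteq J_{\mathbb R}(I)$, and each of these three inclusions can be strict (for suitable $A$ and $I$).
   Context: A $C^\infty$-ring is a product-preserving functor from the category of $\mathbb R^n$ ($n\ge0$) and smooth maps to sets; ideals are ideals of the underlying commutative $\mathbb R$-algebra; $A\{a^{-1}\}$ is the $C^\infty$-ring obtained by universally inverting $a$ among $C^\infty$-rings. For an ideal $I$: $\sqrt I$ is the nilradical $\{f\mid\exists k\ge1, f^k\in I\}$; $\sqrt[\infty]{I}:=\{f\in A\mid (A/I)\{f^{-1}\}\cong 0\}$; $J(I)$ is the intersection of all maximal ideals containing $I$; $J_{\mathbb R}(I)$ is the intersection of all maximal ideals containing $I$ whose residue field is $\mathbb R$ (an empty intersection being $A$). *)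

(* Defs.v *)
From HB Require Import structures.
From mathcomp Require Import all_boot all_order all_algebra.
From mathcomp Require Import all_classical all_reals all_analysis.
From mathcomp Require Import Rstruct Rstruct_topology.
From Stdlib Require Import Rdefinitions.

Set Implicit Arguments.
Unset Strict Implicit.
Unset Printing Implicit Defensive.

Import Order.TTheory GRing.Theory Num.Theory.
Import numFieldNormedType.Exports.
Local Open Scope ring_scope.

Notation RR := Rdefinitions.R.

Fixpoint Ck (k : nat) (n : nat) (f : 'rV[RR]_n -> RR^o) : Prop :=
  match k with
  | 0 => continuous f
  | k'.+1 => (forall x, differentiable f x) /\
             (forall i : 'I_n, Ck k' (fun x => derive f x (delta_mx 0 i)))
  end.

Definition smooth (n : nat) (f : 'rV[RR]_n -> RR^o) : Prop := forall k, Ck k f.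

(** ** C^oo-rings, presented as algebras for the Lawvere theory of smooth maps:
    for each smooth f : R^n -> R an n-ary operation Phi_f : A^n -> A,
    compatible with projections and composition.  (This is the same data as a
    product-preserving functor Euc -> Set, with A = F(R).)  The operation is
    given on all functions R^n -> R for convenience; only its values on smooth
    functions are constrained and used. *)
Record CinfRing := {
  carrier :> Type;
  Phi : forall n : nat, ('rV[RR]_n -> RR) -> ('I_n -> carrier) -> carrier;
  Phi_proj : forall n (i : 'I_n) (a : 'I_n -> carrier),
      Phi (fun x => x 0 i) a = a i;
  Phi_comp : forall n m (f : 'rV[RR]_m -> RR) (g : 'I_m -> 'rV[RR]_n -> RR)
      (a : 'I_n -> carrier),
      smooth f -> (forall j, smooth (g j)) ->
      Phi (fun x => f (\row_j g j x)) a = Phi f (fun j => Phi (g j) a)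
}.

Definition cinf_hom (A B : CinfRing) (phi : A -> B) : Prop :=
  forall n (f : 'rV[RR]_n -> RR) (a : 'I_n -> A),
    smooth f -> phi (Phi f a) = Phi f (fun i => phi (a i)).


Definition no_args (T : Type) : 'I_0 -> T.
Proof. by case. Defined.

Definition args2 (T : Type) (a b : T) : 'I_2 -> T :=
  fun i => if val i == 0%N then a else b.

Section Alg.
Variable A : CinfRing.
Definition cconst (r : RR) : A := Phi (fun _ : 'rV[RR]_0 => r) (@no_args A).
Definition czero : A := cconst 0.
Definition cone : A := cconst 1.
Definition cadd (a b : A) : A :=
  Phi (fun x : 'rV[RR]_2 => x 0 0 + x 0 1) (args2 a b).
Definition csub (a b : A) : A :=
  Phi (fun x : 'rV[RR]_2 => x 0 0 - x 0 1) (args2 a b).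
Definition cmul (a b : A) : A :=
  Phi (fun x : 'rV[RR]_2 => x 0 0 * x 0 1) (args2 a b).
Definition cpow (a : A) (k : nat) : A := iter k (cmul a) cone.
End Alg.

Section Ideals.
Variable A : CinfRing.

Definition ideal (I : A -> Prop) : Prop :=
  [/\ I (czero A), (forall a b, I a -> I b -> I (cadd a b))
    & (forall a b, I b -> I (cmul a b))].

Definition maximal_ideal (m : A -> Prop) : Prop :=
  [/\ ideal m, ~ m (cone A) &
      forall m' : A -> Prop, ideal m' -> (forall a, m a -> m' a) -> ~ m' (cone A) ->
        forall a, m' a -> m a].

(** residue field A/m is R : the map R -> A/m is onto *)
Definition residue_R (m : A -> Prop) : Prop :=
  forall a : A, exists r : RR, m (csub a (cconst A r)).

Definition nilrad (I : A -> Prop) (f : A) : Prop :=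
  exists k : nat, leq 1 k /\ I (cpow f k).

(** C^oo-radical:  f such that (A/I){f^-1} = 0.  By the universal property of
    A/I and of the C^oo-localization, this says: every C^oo-ring morphism
    phi : A -> B killing I and making phi f invertible has B the zero ring. *)
Definition cinf_rad (I : A -> Prop) (f : A) : Prop :=
  forall (B : CinfRing) (phi : A -> B), cinf_hom phi ->
    (forall x, I x -> phi x = czero B) ->
    (exists g : B, cmul (phi f) g = cone B) ->
    cone B = czero B.

Definition jac (I : A -> Prop) (f : A) : Prop :=
  forall m, maximal_ideal m -> (forall x, I x -> m x) -> m f.

Definition jacR (I : A -> Prop) (f : A) : Prop :=
  forall m, maximal_ideal m -> residue_R m -> (forall x, I x -> m x) -> m f.
End Ideals.

Definition incl_pred (T : Type) (P Q : T -> Prop) : Prop := forall x, P x -> Q x.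

(* Main.v *)
Require Import Defs.
From mathcomp Require Import all_boot all_order all_algebra.
From mathcomp Require Import all_classical all_reals all_analysis.
From mathcomp Require Import Rstruct Rstruct_topology.
From HB Require Import structures.
From mathcomp Require Import ring lra.
Require Import Defs.
Set Implicit Arguments.
Unset Strict Implicit.
Unset Printing Implicit Defensive.
Import Order.TTheory GRing.Theory Num.Theory.
Import numFieldNormedType.Exports.
Local Open Scope ring_scope.
Local Open Scope classical_set_scope.


Lemma Ck_cont k n (f : 'rV[RR]_n -> RR^o) : Ck k f -> continuous f.
Proof.
case: k => [//|k] [df _] x; exact: differentiable_continuous.
Qed.

Lemma Ck_mono k n (f : 'rV[RR]_n -> RR^o) : Ck k.+1 f -> Ck k f.
Proof.
elim: k n f => [|k IH] n f /= [df hd]; first by move=> x; exact: differentiable_continuous.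
by split => // i; exact: IH (hd i).
Qed.

Lemma Ck_ext k n (f g : 'rV[RR]_n -> RR^o) : f =1 g -> Ck k f -> Ck k g.
Proof. by move=> /funext ->. Qed.

Lemma Ck_cst k n (c : RR) : Ck k (fun _ : 'rV[RR]_n => c : RR^o).
Proof.
elim: k c => [|k IH] c /=; first exact: cst_continuous.
split=> [x|i]; first exact: differentiable_cst.
apply: (Ck_ext _ (IH 0)) => x /=.
by rewrite (derive_cst (c : RR^o)).
Qed.

Definition coordf n (i : 'I_n) := fun x : 'rV[RR]_n => (x 0 i : RR^o).

Lemma derive_coord n (i : 'I_n) x v : derive (coordf i) x v = v 0 i.
Proof.
have @f : {linear 'rV[RR]_n -> RR^o}.
  by exists (fun N : 'rV[RR]_n => (N 0 i : RR^o)); do 2![eexists]; do ?[constructor];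
     rewrite ?mxE// => ? *; rewrite ?mxE//; move=> ?; rewrite !mxE.
have -> : coordf i = f by [].
rewrite deriveE; last exact/linear_differentiable/coord_continuous.
by rewrite diff_lin //; exact: coord_continuous.
Qed.

Lemma Ck_coord k n (i : 'I_n) : Ck k (coordf i).
Proof.
case: k => [|k] /=; first exact: coord_continuous.
split=> [x|j]; first exact: differentiable_coord.
apply: (Ck_ext _ (Ck_cst k _ ((delta_mx 0 j : 'rV[RR]_n) 0 i))) => x /=.
by rewrite derive_coord.
Qed.

Lemma row_sumE n (T : Type) (g : 'I_n -> T -> RR) :
  (fun t => \row_j g j t) = \sum_j (fun t => g j t *: (delta_mx 0 j : 'rV[RR]_n)).
Proof.
apply/funext => t; rewrite fct_sumE.
transitivity (\sum_j (\row_j g j t) 0 j *: (delta_mx 0 j : 'rV[RR]_n)).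
  exact: row_sum_delta.
by apply: eq_bigr => i _; rewrite mxE.
Qed.

Lemma cont_sum (T : topologicalType) (V : normedModType RR) (I : Type) (s : seq I)
  (F : I -> T -> V) : (forall i, continuous (F i)) ->
  continuous (fun t => \sum_(i <- s) F i t).
Proof.
move=> hF; elim: s => [|i s IH] /=.
  by under eq_fun do rewrite big_nil; exact: cst_continuous.
under eq_fun do rewrite big_cons.
by move=> t; apply: continuousD; [exact: hF | exact: IH].
Qed.

Lemma row_cont (T : topologicalType) n (g : 'I_n -> T -> RR) :
  (forall j, continuous (g j)) -> continuous (fun t => \row_j g j t).
Proof.
move=> hg; rewrite row_sumE fct_sumE.
apply: (cont_sum (F := fun j t => g j t *: (delta_mx 0 j : 'rV[RR]_n))) => j t.
by apply: continuousZr_tmp; apply: hg.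
Qed.

Lemma row_diff n m (g : 'I_m -> 'rV[RR]_n -> RR^o) x :
  (forall j, differentiable (g j) x) -> differentiable (fun t => \row_j g j t) x.
Proof.
move=> hg; rewrite row_sumE; apply: differentiable_sum => j.
exact: differentiableZl.
Qed.

Lemma ord2P (j : 'I_2) : j = 0 \/ j = 1.
Proof. by case: j => [[|[|//]] hj]; [left|right]; apply/val_inj. Qed.

Definition m2f := fun x : 'rV[RR]_2 => (x 0 0 * x 0 1 : RR^o).
Definition a2f := fun x : 'rV[RR]_2 => (x 0 0 + x 0 1 : RR^o).

Lemma m2fE : m2f = coordf 0 * coordf 1.
Proof. by apply/funext. Qed.
Lemma a2fE : a2f = coordf 0 + coordf 1.
Proof. by apply/funext. Qed.

Lemma diff_coordf n (i : 'I_n) x : differentiable (coordf i) x.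
Proof. exact: differentiable_coord. Qed.

Lemma Ck_m2 k : Ck k m2f.
Proof.
have dm x : differentiable m2f x by rewrite m2fE; apply: differentiableM; exact: diff_coordf.
case: k => [|k] /=; first by move=> x; exact: differentiable_continuous.
split=> // j.
have -> : (fun x => derive m2f x (delta_mx 0 j)) = coordf (if j == 0 then 1 else 0).
  apply/funext => x; rewrite m2fE deriveM; try exact/diff_derivable/diff_coordf.
  rewrite !derive_coord !mxE /coordf /=.
  case: (ord2P j) => -> /=; rewrite scaler0 ?add0r ?addr0; exact: mulr1.
apply: (Ck_coord k (if j == 0 then 1 else 0)).
Qed.

Lemma Ck_a2 k : Ck k a2f.
Proof.
have dm x : differentiable a2f x by rewrite a2fE; apply: differentiableD; exact: diff_coordf.
case: k => [|k] /=; first by move=> x; exact: differentiable_continuous.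
split=> // j.
have -> : (fun x => derive a2f x (delta_mx 0 j)) = (fun _ => 1 : RR^o).
  apply/funext => x; rewrite a2fE deriveD; try exact/diff_derivable/diff_coordf.
  rewrite !derive_coord !mxE /=.
  by case: (ord2P j) => ->; rewrite /= ?addr0 ?add0r.
exact: Ck_cst.
Qed.

Lemma chain_pd n m (f : 'rV[RR]_m -> RR^o) (g : 'I_m -> 'rV[RR]_n -> RR^o) x v :
  differentiable f (\row_j g j x) -> (forall j, differentiable (g j) x) ->
  derive (fun y => f (\row_j g j y)) x v =
  \sum_j derive f (\row_j g j x) (delta_mx 0 j) * derive (g j) x v.
Proof.
move=> df dg.
pose h := fun y => \row_j g j y.
have dh : differentiable h x := row_diff dg.
have -> : (fun y => f (\row_j g j y)) = f \o h by [].
rewrite deriveE; last exact: differentiable_comp.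
rewrite diff_comp //= -(deriveE v dh) derive_mx; last exact: diff_derivable.
rewrite [X in 'd f _ X]row_sum_delta linear_sum; apply: eq_bigr => j _.
rewrite linearZ /= -(deriveE _ df) mxE mulrC; congr (_ * _).
by congr (derive _ x v); apply/funext => t; rewrite /h mxE.
Qed.

Lemma Ck_sum_gen k n (I : Type) (s : seq I) (F : I -> 'rV[RR]_n -> RR^o) :
  (forall F G : 'rV[RR]_n -> RR^o, Ck k F -> Ck k G -> Ck k (fun x => F x + G x)) ->
  (forall i, Ck k (F i)) -> Ck k (fun x => \sum_(i <- s) F i x).
Proof.
move=> hadd hF; elim: s => [|i s IH].
  by apply: (Ck_ext _ (Ck_cst k n 0)) => x; rewrite big_nil.
apply: (Ck_ext _ (hadd _ _ (hF i) IH)) => x; by rewrite big_cons.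
Qed.

Lemma Ck_comp k : forall n m (f : 'rV[RR]_m -> RR^o) (g : 'I_m -> 'rV[RR]_n -> RR^o),
  Ck k f -> (forall j, Ck k (g j)) -> Ck k (fun x => f (\row_j g j x)).
Proof.
elim: k => [|k IH] n m f g.
  move=> /= cf cg x.
  apply: (@continuous_comp _ _ _ (fun y => \row_j g j y) f x); first exact: row_cont.
  exact: cf.
move=> [df pf] hg.
have dg j x : differentiable (g j) x := (hg j).1 x.
split.
  move=> x; have -> : (fun y => f (\row_j g j y)) = f \o (fun y => \row_j g j y) by [].
  by apply: differentiable_comp; [exact: row_diff | exact: df].
move=> i.
have hmul (F G : 'rV[RR]_n -> RR^o) : Ck k F -> Ck k G -> Ck k (fun x => F x * G x).
  move=> cF cG; have := IH n 2 m2f (args2 F G) (Ck_m2 k).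
  have hFG j : Ck k (args2 F G j) by rewrite /args2; case: ifP.
  move=> /(_ hFG); apply: Ck_ext => x; by rewrite /m2f !mxE /args2.
have hadd (F G : 'rV[RR]_n -> RR^o) : Ck k F -> Ck k G -> Ck k (fun x => F x + G x).
  move=> cF cG; have := IH n 2 a2f (args2 F G) (Ck_a2 k).
  have hFG j : Ck k (args2 F G j) by rewrite /args2; case: ifP.
  move=> /(_ hFG); apply: Ck_ext => x; by rewrite /a2f !mxE /args2.
have := Ck_sum_gen (index_enum 'I_m)
  (F := fun j x => derive f (\row_j g j x) (delta_mx 0 j) * derive (g j) x (delta_mx 0 i)) hadd.
have hterm j : Ck k (fun x => derive f (\row_j g j x) (delta_mx 0 j) * derive (g j) x (delta_mx 0 i)).
  apply: hmul; last exact: (hg j).2.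
  apply: (IH n m (fun y => derive f y (delta_mx 0 j)) g (pf j)) => j'.
  exact: Ck_mono.
move=> /(_ hterm); apply: Ck_ext => x.
by rewrite chain_pd.
Qed.

Lemma Ck_mul k n (F G : 'rV[RR]_n -> RR^o) : Ck k F -> Ck k G -> Ck k (fun x => F x * G x).
Proof.
move=> cF cG; have := @Ck_comp k n 2 m2f (args2 F G) (Ck_m2 k).
have hFG j : Ck k (args2 F G j) by rewrite /args2; case: ifP.
move=> /(_ hFG); apply: Ck_ext => x; by rewrite /m2f !mxE /args2.
Qed.

Lemma Ck_add k n (F G : 'rV[RR]_n -> RR^o) : Ck k F -> Ck k G -> Ck k (fun x => F x + G x).
Proof.
move=> cF cG; have := @Ck_comp k n 2 a2f (args2 F G) (Ck_a2 k).
have hFG j : Ck k (args2 F G j) by rewrite /args2; case: ifP.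
move=> /(_ hFG); apply: Ck_ext => x; by rewrite /a2f !mxE /args2.
Qed.

Lemma Ck_opp k n (F : 'rV[RR]_n -> RR^o) : Ck k F -> Ck k (fun x => - F x).
Proof.
move=> cF; apply: (Ck_ext _ (Ck_mul (Ck_cst k n (-1)) cF)) => x.
by rewrite mulN1r.
Qed.

Lemma Ck_sub k n (F G : 'rV[RR]_n -> RR^o) : Ck k F -> Ck k G -> Ck k (fun x => F x - G x).
Proof. by move=> cF cG; apply: Ck_add => //; exact: Ck_opp. Qed.

Lemma Ck_sum k n (I : Type) (s : seq I) (F : I -> 'rV[RR]_n -> RR^o) :
  (forall i, Ck k (F i)) -> Ck k (fun x => \sum_(i <- s) F i x).
Proof. apply: Ck_sum_gen => F0 G0; exact: Ck_add. Qed.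

Lemma Ck_inv k : forall n (S : 'rV[RR]_n -> RR^o), Ck k S -> (forall x, S x != 0) ->
  Ck k (fun x => (S x)^-1).
Proof.
elim: k => [|k IH] n S cS S0.
  move=> x; apply: continuousV => //; exact: cS.
have dS x : differentiable S x := cS.1 x.
split.
  move=> x; exact: differentiableV.
move=> i.
have h1 : Ck k (fun x => - ((S x)^-1 * (S x)^-1) * derive S x (delta_mx 0 i)).
  apply: Ck_mul; last exact: cS.2.
  apply: Ck_opp; apply: Ck_mul; apply: IH => //; exact: Ck_mono.
apply: (Ck_ext _ h1) => x /=.
rewrite deriveV //; last exact: diff_derivable.
by rewrite -exprVn expr2.
Qed.

Definition smooth_cst n c : smooth (fun _ : 'rV[RR]_n => c : RR^o) := fun k => Ck_cst k n c.
Definition smooth_coord n (i : 'I_n) : smooth (coordf i) := fun k => Ck_coord k i.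
Lemma smooth_comp n m (f : 'rV[RR]_m -> RR^o) (g : 'I_m -> 'rV[RR]_n -> RR^o) :
  smooth f -> (forall j, smooth (g j)) -> smooth (fun x => f (\row_j g j x)).
Proof. by move=> hf hg k; exact: (@Ck_comp k n m f g (hf k) (fun j => hg j k)). Qed.
Lemma smooth_mul n (F G : 'rV[RR]_n -> RR^o) : smooth F -> smooth G -> smooth (fun x => F x * G x).
Proof. by move=> hf hg k; apply: Ck_mul. Qed.
Lemma smooth_add n (F G : 'rV[RR]_n -> RR^o) : smooth F -> smooth G -> smooth (fun x => F x + G x).
Proof. by move=> hf hg k; apply: Ck_add. Qed.
Lemma smooth_sub n (F G : 'rV[RR]_n -> RR^o) : smooth F -> smooth G -> smooth (fun x => F x - G x).
Proof. by move=> hf hg k; apply: Ck_sub. Qed.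
Lemma smooth_opp n (F : 'rV[RR]_n -> RR^o) : smooth F -> smooth (fun x => - F x).
Proof. by move=> hf k; apply: Ck_opp. Qed.
Lemma smooth_sum n (I : Type) (s : seq I) (F : I -> 'rV[RR]_n -> RR^o) :
  (forall i, smooth (F i)) -> smooth (fun x => \sum_(i <- s) F i x).
Proof. by move=> hF k; exact: (Ck_sum s (fun i => hF i k)). Qed.
Lemma smooth_inv n (S : 'rV[RR]_n -> RR^o) : smooth S -> (forall x, S x != 0) ->
  smooth (fun x => (S x)^-1).
Proof. by move=> hS h0 k; apply: Ck_inv. Qed.
Lemma smooth_ext n (f g : 'rV[RR]_n -> RR^o) : f =1 g -> smooth f -> smooth g.
Proof. by move=> /funext ->. Qed.
Lemma smooth_proj n (i : 'I_n) : smooth (fun x : 'rV[RR]_n => x 0 i).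
Proof. exact: smooth_coord. Qed.

Section CAlg.
Variable B : CinfRing.

Lemma Phi_ext n (F G : 'rV[RR]_n -> RR) (a : 'I_n -> B) : F =1 G -> Phi F a = Phi G a.
Proof. by move=> /funext ->. Qed.

Lemma smooth_a2 : smooth (fun x : 'rV[RR]_2 => x 0 0 + x 0 1 : RR^o).
Proof. by apply: smooth_add; exact: smooth_proj. Qed.
Lemma smooth_s2 : smooth (fun x : 'rV[RR]_2 => x 0 0 - x 0 1 : RR^o).
Proof. by apply: smooth_sub; exact: smooth_proj. Qed.
Lemma smooth_m2 : smooth (fun x : 'rV[RR]_2 => x 0 0 * x 0 1 : RR^o).
Proof. by apply: smooth_mul; exact: smooth_proj. Qed.

Lemma args2_fun n (F G : 'rV[RR]_n -> RR) (a : 'I_n -> B) :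
  (fun j => Phi (args2 F G j) a) = args2 (Phi F a) (Phi G a).
Proof. by apply/funext => j; rewrite /args2; case: ifP. Qed.

Lemma Phi_addE n (F G : 'rV[RR]_n -> RR^o) (a : 'I_n -> B) : smooth F -> smooth G ->
  Phi (fun x => F x + G x) a = cadd (Phi F a) (Phi G a).
Proof.
move=> sF sG; rewrite /cadd -args2_fun -Phi_comp //; last first.
  by move=> j; rewrite /args2; case: ifP.
  exact: smooth_a2.
by apply: Phi_ext => x; rewrite !mxE /args2.
Qed.

Lemma Phi_subE n (F G : 'rV[RR]_n -> RR^o) (a : 'I_n -> B) : smooth F -> smooth G ->
  Phi (fun x => F x - G x) a = csub (Phi F a) (Phi G a).
Proof.
move=> sF sG; rewrite /csub -args2_fun -Phi_comp //; last first.
  by move=> j; rewrite /args2; case: ifP.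
  exact: smooth_s2.
by apply: Phi_ext => x; rewrite !mxE /args2.
Qed.

Lemma Phi_mulE n (F G : 'rV[RR]_n -> RR^o) (a : 'I_n -> B) : smooth F -> smooth G ->
  Phi (fun x => F x * G x) a = cmul (Phi F a) (Phi G a).
Proof.
move=> sF sG; rewrite /cmul -args2_fun -Phi_comp //; last first.
  by move=> j; rewrite /args2; case: ifP.
  exact: smooth_m2.
by apply: Phi_ext => x; rewrite !mxE /args2.
Qed.

Lemma Phi_cstE n (c : RR) (a : 'I_n -> B) : Phi (fun _ => c) a = cconst B c.
Proof.
rewrite /cconst.
have := @Phi_comp B n 0 (fun _ => c) (fun _ => fun _ => 0) a (smooth_cst 0 c)
  (fun _ => smooth_cst n 0).
move=> /= ->; congr (Phi _ _); apply/funext => -[] //.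
Qed.


Lemma czeroE : czero B = cconst B 0.
Proof. by []. Qed.
Lemma coneE : cone B = cconst B 1.
Proof. by []. Qed.

Ltac sm := repeat first [apply: smooth_add | apply: smooth_mul | apply: smooth_sub
  | apply: smooth_opp | apply: smooth_proj | apply: smooth_cst].

Definition w3 (x y z : B) : 'I_3 -> B :=
  fun i => if val i == 0%N then x else if val i == 1%N then y else z.

Lemma w3E (x y z : B) :
  [/\ x = Phi (fun v : 'rV[RR]_3 => v 0 0) (w3 x y z),
      y = Phi (fun v : 'rV[RR]_3 => v 0 1) (w3 x y z) &
      z = Phi (fun v : 'rV[RR]_3 => v 0 2) (w3 x y z)].
Proof. by rewrite !Phi_proj. Qed.

Definition copp (x : B) := csub (czero B) x.

Lemma caddA (x y z : B) : cadd (cadd x y) z = cadd x (cadd y z).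
Proof.
have [ex ey ez] := w3E x y z; move: (w3 x y z) ex ey ez => w ex ey ez; rewrite ex ey ez -!Phi_addE; try sm.
by apply: Phi_ext => v; rewrite addrA.
Qed.

Lemma caddC (x y : B) : cadd x y = cadd y x.
Proof.
have [ex ey _] := w3E x y x; move: (w3 x y x) ex ey => w ex ey; rewrite ex ey -!Phi_addE; try sm.
by apply: Phi_ext => v; rewrite addrC.
Qed.

Lemma cadd0 (x : B) : cadd (czero B) x = x.
Proof.
have [ex _ _] := w3E x x x; move: (w3 x x x) ex => w ex; rewrite ex czeroE -(Phi_cstE _ w) -!Phi_addE; try sm.
by apply: Phi_ext => v; rewrite add0r.
Qed.

Lemma caddN (x : B) : cadd (copp x) x = czero B.
Proof.
have [ex _ _] := w3E x x x; move: (w3 x x x) ex => w ex; rewrite /copp ex czeroE -(Phi_cstE _ w).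
rewrite -!Phi_subE; try sm; rewrite -!Phi_addE; try sm.
by apply: Phi_ext => v; rewrite add0r addNr.
Qed.

Lemma cmulA (x y z : B) : cmul (cmul x y) z = cmul x (cmul y z).
Proof.
have [ex ey ez] := w3E x y z; move: (w3 x y z) ex ey ez => w ex ey ez; rewrite ex ey ez -!Phi_mulE; try sm.
by apply: Phi_ext => v; rewrite mulrA.
Qed.

Lemma cmulC (x y : B) : cmul x y = cmul y x.
Proof.
have [ex ey _] := w3E x y x; move: (w3 x y x) ex ey => w ex ey; rewrite ex ey -!Phi_mulE; try sm.
by apply: Phi_ext => v; rewrite mulrC.
Qed.

Lemma cmul1 (x : B) : cmul (cone B) x = x.
Proof.
have [ex _ _] := w3E x x x; move: (w3 x x x) ex => w ex; rewrite ex coneE -(Phi_cstE _ w) -!Phi_mulE; try sm.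
by apply: Phi_ext => v; rewrite mul1r.
Qed.

Lemma cmulDl (x y z : B) : cmul (cadd x y) z = cadd (cmul x z) (cmul y z).
Proof.
have [ex ey ez] := w3E x y z; move: (w3 x y z) ex ey ez => w ex ey ez; rewrite ex ey ez -!Phi_addE; try sm; rewrite -!Phi_mulE; try sm.
rewrite -!Phi_addE; try sm.
by apply: Phi_ext => v; rewrite mulrDl.
Qed.

Lemma csubE (x y : B) : csub x y = cadd x (copp y).
Proof.
have [ex ey _] := w3E x y x; move: (w3 x y x) ex ey => w ex ey; rewrite /copp ex ey czeroE -(Phi_cstE _ w).
rewrite -!Phi_subE; try sm; rewrite -!Phi_addE; try sm.
by apply: Phi_ext => v; rewrite add0r.
Qed.

End CAlg.

Definition RB (B : CinfRing) : Type := carrier B.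
HB.instance Definition _ (B : CinfRing) := gen_eqMixin (RB B).
HB.instance Definition _ (B : CinfRing) := gen_choiceMixin (RB B).
HB.instance Definition _ (B : CinfRing) :=
  @GRing.isZmodule.Build (RB B) (czero B) (@copp B) (@cadd B) (fun x y z => esym (@caddA B x y z)) (@caddC B) (@cadd0 B) (@caddN B).
HB.instance Definition _ (B : CinfRing) :=
  @GRing.Zmodule_isComPzRing.Build (RB B) (cone B) (@cmul B) (fun x y z => esym (@cmulA B x y z)) (@cmulC B) (@cmul1 B) (@cmulDl B).

Section RBE.
Variable B : CinfRing.
Lemma caddE (x y : B) : cadd x y = (x : RB B) + (y : RB B). Proof. by []. Qed.
Lemma cmulE (x y : B) : cmul x y = (x : RB B) * (y : RB B). Proof. by []. Qed.
Lemma czeroE' : czero B = (0 : RB B). Proof. by []. Qed.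
Lemma coneE' : cone B = (1 : RB B). Proof. by []. Qed.
Lemma csubE' (x y : B) : csub x y = (x : RB B) - (y : RB B). Proof. by rewrite csubE. Qed.
Lemma cpowE (x : B) k : cpow x k = (x : RB B) ^+ k.
Proof. elim: k => [|k IH] //=; by rewrite IH cmulE exprS. Qed.
End RBE.

Ltac to_ring := rewrite ?caddE ?cmulE ?czeroE' ?coneE' ?csubE' ?cpowE;
  match goal with |- @eq (carrier ?B) ?a ?b => change (@eq (RB B) a b) end.


Section HomLemmas.
Variables (A B : CinfRing) (phi : A -> B).
Hypothesis hphi : cinf_hom phi.

Lemma hom_args2 (x y : A) : (fun i => phi (args2 x y i)) = args2 (phi x) (phi y).
Proof. by apply/funext => i; rewrite /args2; case: ifP. Qed.

Lemma hom_cadd x y : phi (cadd x y) = cadd (phi x) (phi y).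
Proof. by rewrite /cadd hphi ?hom_args2 //; exact: smooth_a2. Qed.
Lemma hom_csub x y : phi (csub x y) = csub (phi x) (phi y).
Proof. by rewrite /csub hphi ?hom_args2 //; exact: smooth_s2. Qed.
Lemma hom_cmul x y : phi (cmul x y) = cmul (phi x) (phi y).
Proof. by rewrite /cmul hphi ?hom_args2 //; exact: smooth_m2. Qed.
Lemma hom_cconst r : phi (cconst A r) = cconst B r.
Proof.
rewrite /cconst hphi; last exact: smooth_cst.
by congr (Phi _ _); apply/funext => -[].
Qed.
Lemma hom_czero : phi (czero A) = czero B. Proof. exact: hom_cconst. Qed.
Lemma hom_cone : phi (cone A) = cone B. Proof. exact: hom_cconst. Qed.
Lemma hom_cpow x k : phi (cpow x k) = cpow (phi x) k.
Proof. elim: k => [|k IH] /=; first exact: hom_cone. by rewrite hom_cmul IH. Qed.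
End HomLemmas.

Section IdealLemmas.
Variables (A : CinfRing) (J : A -> Prop).
Hypothesis hJ : ideal J.
Lemma J0 : J (czero A). Proof. by case: hJ. Qed.
Lemma JD x y : J x -> J y -> J (cadd x y). Proof. by case: hJ => _ h _; apply: h. Qed.
Lemma JM x y : J y -> J (cmul x y). Proof. by case: hJ => _ _ h; apply: h. Qed.
Lemma JMr x y : J x -> J (cmul x y). Proof. by move=> h; rewrite cmulC; apply: JM. Qed.
Lemma JN x : J x -> J (csub (czero A) x).
Proof.
move=> h; have -> : csub (czero A) x = cmul (csub (czero A) (cone A)) x by to_ring; ring.
exact: JM.
Qed.
Lemma JB x y : J x -> J y -> J (csub x y).
Proof.
move=> hx hy; have -> : csub x y = cadd x (csub (czero A) y) by to_ring; ring.
by apply: JD => //; apply: JN.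
Qed.
Lemma Jeq x y : x = y -> J x -> J y. Proof. by move->. Qed.
End IdealLemmas.

Section Quot.
Variables (A : CinfRing) (J : A -> Prop).
Hypothesis hJ : ideal J.
Hypothesis cong : forall n (f : 'rV[RR]_n -> RR) (a b : 'I_n -> A), smooth f ->
  (forall i, J (csub (a i) (b i))) -> J (csub (Phi f a) (Phi f b)).

Definition eqv (x y : A) := J (csub x y).
Lemma eqv_refl x : eqv x x.
Proof. rewrite /eqv; have -> : csub x x = czero A by to_ring; ring. exact: J0. Qed.
Lemma eqv_sym x y : eqv x y -> eqv y x.
Proof.
rewrite /eqv => h; have -> : csub y x = csub (czero A) (csub x y) by to_ring; ring.
exact: JN.
Qed.
Lemma eqv_trans x y z : eqv x y -> eqv y z -> eqv x z.
Proof.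
rewrite /eqv => h1 h2; have -> : csub x z = cadd (csub x y) (csub y z) by to_ring; ring.
exact: JD.
Qed.

Definition canon (x : A) : A := proj1_sig (cid (ex_intro (fun y => eqv y x) x (eqv_refl x))).
Lemma canon_eqv x : eqv (canon x) x.
Proof. by rewrite /canon; case: cid. Qed.
Lemma canon_eq x y : eqv x y -> canon x = canon y.
Proof.
move=> hxy.
suff H : forall (P Q : A -> Prop) (p : exists z, P z) (q : exists z, Q z),
    P = Q -> proj1_sig (cid p) = proj1_sig (cid q).
  apply: H; apply/funext => z; apply/propext; split => h.
    exact: eqv_trans h hxy.
  exact: eqv_trans h (eqv_sym hxy).
by move=> P Q p q PQ; subst Q; rewrite (Prop_irrelevance p q).
Qed.
Lemma canon_idem x : canon (canon x) = canon x.
Proof. exact/canon_eq/canon_eqv. Qed.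

Definition Qt := {x : A | canon x = x}.
Definition cl (x : A) : Qt := exist _ (canon x) (canon_idem x).
Lemma cl_val (q : Qt) : cl (proj1_sig q) = q.
Proof. by case: q => x hx; apply: eq_exist. Qed.
Lemma cl_eq x y : eqv x y -> cl x = cl y.
Proof. by move=> h; apply: eq_exist; exact: canon_eq. Qed.
Lemma cl_eqv x y : cl x = cl y -> eqv x y.
Proof.
move=> /(congr1 (@proj1_sig _ _)) /= h.
apply: eqv_trans (eqv_sym (canon_eqv x)) _; rewrite h; exact: canon_eqv.
Qed.

Definition PhiQ n (f : 'rV[RR]_n -> RR) (a : 'I_n -> Qt) : Qt :=
  cl (Phi f (fun i => proj1_sig (a i))).

Lemma PhiQ_proj n (i : 'I_n) (a : 'I_n -> Qt) : PhiQ (fun x => x 0 i) a = a i.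
Proof. by rewrite /PhiQ Phi_proj cl_val. Qed.

Lemma PhiQ_comp n m (f : 'rV[RR]_m -> RR) (g : 'I_m -> 'rV[RR]_n -> RR) (a : 'I_n -> Qt) :
  smooth f -> (forall j, smooth (g j)) ->
  PhiQ (fun x => f (\row_j g j x)) a = PhiQ f (fun j => PhiQ (g j) a).
Proof.
move=> sf sg; rewrite /PhiQ Phi_comp //; apply: cl_eq; apply: cong => // j /=.
exact: eqv_sym (canon_eqv _).
Qed.

Definition QR : CinfRing := Build_CinfRing PhiQ_proj PhiQ_comp.

Lemma cl_hom : cinf_hom (cl : A -> QR).
Proof.
move=> n f a sf /=; rewrite /PhiQ; apply: cl_eq; apply: cong => // i /=.
exact: eqv_sym (canon_eqv _).
Qed.

Lemma cl_cconst r : cconst QR r = cl (cconst A r).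
Proof. by rewrite /cconst /= /PhiQ; congr (cl (Phi _ _)); apply/funext => -[]. Qed.

End Quot.


Lemma split_l m k (i : 'I_m) : fintype.split (lshift k i) = inl i.
Proof. exact: (unsplitK (inl i)). Qed.
Lemma split_r m k (i : 'I_k) : fintype.split (rshift m i) = inr i.
Proof. exact: (unsplitK (inr i)). Qed.

Section Maximal.
Variables (A : CinfRing).

Lemma max_inv (m : A -> Prop) (c : A) : maximal_ideal m -> ~ m c ->
  exists y h, m h /\ cone A = cadd h (cmul y c).
Proof.
move=> [im m1 mmax] mc.
pose m' z := exists y h, m h /\ z = cadd h (cmul y c).
have im' : ideal m'.
  split.
  - exists (czero A), (czero A); split; first exact: J0.
    by to_ring; ring.
  - move=> u v [y1 [h1 [mh1 ->]]] [y2 [h2 [mh2 ->]]].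
    exists (cadd y1 y2), (cadd h1 h2); split; first exact: JD.
    by to_ring; ring.
  - move=> u v [y1 [h1 [mh1 ->]]].
    exists (cmul u y1), (cmul u h1); split; first exact: JM.
    by to_ring; ring.
have [//|n1] := pselect (m' (cone A)).
exfalso; apply: mc; apply: (mmax m' im') => //.
  move=> u mu; exists (czero A), u; split => //; by to_ring; ring.
exists (cone A), (czero A); split; first exact: J0.
by to_ring; ring.
Qed.

Lemma Phi_sum_J (J : A -> Prop) (hJ : ideal J) n (I : Type) (s : seq I)
  (F : I -> 'rV[RR]_n -> RR^o) (w : 'I_n -> A) :
  (forall i, smooth (F i)) -> (forall i, J (Phi (F i) w)) ->
  J (Phi (fun v => \sum_(i <- s) F i v) w).
Proof.
move=> sF JF; elim: s => [|i s IH].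
  under Phi_ext do rewrite big_nil.
  by rewrite Phi_cstE; exact: J0.
under Phi_ext do rewrite big_cons.
rewrite Phi_addE //; first exact: JD.
exact: smooth_sum.
Qed.

Definition wab n (a b : 'I_n -> A) (y : A) : 'I_(n + n + 1) -> A :=
  fun j => match fintype.split j with
           | inl j1 => match fintype.split j1 with inl i => a i | inr i => b i end
           | inr _ => y end.
Definition xa n (i : 'I_n) : 'I_(n + n + 1) := lshift 1 (lshift n i).
Definition xb n (i : 'I_n) : 'I_(n + n + 1) := lshift 1 (rshift n i).
Definition xy n : 'I_(n + n + 1) := rshift (n + n) (ord0 : 'I_1).

Lemma wab_a n a b y (i : 'I_n) : wab a b y (xa i) = a i.
Proof. by rewrite /wab /xa !split_l. Qed.
Lemma wab_b n a b y (i : 'I_n) : wab a b y (xb i) = b i.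
Proof. by rewrite /wab /xb split_l split_r. Qed.
Lemma wab_y n a b y : wab a b y (xy n) = y.
Proof. by rewrite /wab /xy split_r. Qed.

Lemma cong_max (m : A -> Prop) : maximal_ideal m ->
  forall n (f : 'rV[RR]_n -> RR) (a b : 'I_n -> A), smooth f ->
  (forall i, m (csub (a i) (b i))) -> m (csub (Phi f a) (Phi f b)).
Proof.
move=> mm n f a b sf hab.
have [im m1 _] := mm.
set c := csub (Phi f a) (Phi f b).
have [//|nc] := pselect (m c).
have [y [h [mh hone]]] := max_inv mm nc.
pose w := wab a b y.
pose Fa := fun v : 'rV[RR]_(n + n + 1) => (f (\row_i v 0 (xa i)) : RR^o).
pose Fb := fun v : 'rV[RR]_(n + n + 1) => (f (\row_i v 0 (xb i)) : RR^o).
pose d := fun i (v : 'rV[RR]_(n + n + 1)) => (v 0 (xa i) - v 0 (xb i) : RR^o).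
pose dd := fun v => \sum_(i <- index_enum 'I_n) d i v * d i v.
pose E := fun v : 'rV[RR]_(n + n + 1) => ((Fa v - Fb v) * v 0 (xy n) - 1 : RR^o).
pose S := fun v => dd v + E v * E v.
have sFa : smooth Fa by apply: smooth_comp => // i; exact: smooth_proj.
have sFb : smooth Fb by apply: smooth_comp => // i; exact: smooth_proj.
have sd i : smooth (d i) by apply: smooth_sub; exact: smooth_proj.
have sdd : smooth dd by apply: smooth_sum => i; apply: smooth_mul; exact: sd.
have sE : smooth E.
  by apply: smooth_sub; [apply: smooth_mul; [exact: smooth_sub|exact: smooth_proj]|exact: smooth_cst].
have sS : smooth S by apply: smooth_add => //; exact: smooth_mul.
have S0 v : S v != 0.
  apply/negP => /eqP S0.
  have dd0 : 0 <= dd v by apply: sumr_ge0 => i _; rewrite -expr2; exact: sqr_ge0.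
  have E0 : 0 <= E v * E v by rewrite -expr2; exact: sqr_ge0.
  move: S0; rewrite /S => /eqP; rewrite paddr_eq0 // => /andP[/eqP hdd /eqP hE].
  have hd i : d i v = 0.
    have := psumr_eq0 (index_enum 'I_n) (P := predT) (F := fun i => d i v * d i v).
    move=> /(_ (fun i _ => (ltac:(rewrite -expr2; exact: sqr_ge0)))).
    rewrite /dd in hdd; rewrite hdd eqxx => /esym/allP/(_ i) /=.
    rewrite mem_index_enum => /(_ isT); rewrite mulf_eq0 orbb => /eqP; exact.
  have hF : Fa v = Fb v.
    rewrite /Fa /Fb; congr f; apply/rowP => i; rewrite !mxE.
    by apply/eqP; rewrite -subr_eq0; apply/eqP; exact: hd.
  by move: hE; rewrite /E hF subrr mul0r sub0r mulrNN mulr1 => /eqP; rewrite oner_eq0.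
have key : cone A = cmul (Phi S w) (Phi (fun v => (S v)^-1) w).
  rewrite -Phi_mulE //; last exact: smooth_inv.
  rewrite coneE -(Phi_cstE _ w); apply: Phi_ext => v.
  by rewrite mulfV.
have hPa : Phi Fa w = Phi f a.
  rewrite /Fa (Phi_comp (g := fun i v => v 0 (xa i))) //; last by move=> i; exact: smooth_proj.
  by congr (Phi f _); apply/funext => i; rewrite Phi_proj /w wab_a.
have hPb : Phi Fb w = Phi f b.
  rewrite /Fb (Phi_comp (g := fun i v => v 0 (xb i))) //; last by move=> i; exact: smooth_proj.
  by congr (Phi f _); apply/funext => i; rewrite Phi_proj /w wab_b.
have PE : Phi E w = csub (cmul c y) (cone A).
  rewrite /E Phi_subE //; last exact: smooth_cst.
    rewrite Phi_mulE //; last exact: smooth_proj.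
      rewrite Phi_subE // hPa hPb Phi_proj /w wab_y Phi_cstE //.
    exact: smooth_sub.
  by apply: smooth_mul; [exact: smooth_sub|exact: smooth_proj].
have mE : m (Phi E w).
  rewrite PE; have -> : csub (cmul c y) (cone A) = csub (czero A) h.
    by rewrite hone; to_ring; ring.
  exact: JN.
have mS : m (Phi S w).
  rewrite /S Phi_addE //; last exact: smooth_mul.
  apply: JD => //.
    apply: (@Phi_sum_J m im _ _ (index_enum 'I_n) (fun i v => d i v * d i v) w).
      by move=> i; apply: smooth_mul.
    move=> i; rewrite Phi_mulE //; apply: JM => //.
    rewrite /d Phi_subE; try exact: smooth_proj.
    by rewrite !Phi_proj /w wab_a wab_b.
  by rewrite Phi_mulE //; apply: JM.
exfalso; apply: m1; rewrite key; exact: JMr.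
Qed.

End Maximal.

Lemma part1 (A : CinfRing) (I : A -> Prop) : ideal I ->
  [/\ incl_pred (nilrad I) (cinf_rad I), incl_pred (cinf_rad I) (jac I)
    & incl_pred (jac I) (jacR I)].
Proof.
move=> iI; split.
- move=> f [k [k1 hk]] B phi hphi hI [g hg].
  have h0 : cpow (phi f) k = czero B by rewrite -hom_cpow // hI.
  have e1 : cpow (cmul (phi f) g) k = cmul (cpow (phi f) k) (cpow g k).
    by to_ring; exact: exprMn.
  rewrite hg h0 in e1.
  have e2 : cpow (cone B) k = cone B by to_ring; exact: expr1n.
  rewrite -e2 e1; to_ring; ring.
- move=> f hf m mm hIm.
  have [im m1 _] := mm.
  have [//|nf] := pselect (m f).
  have [y [h [mh hone]]] := max_inv mm nf.
  pose Q := QR im (cong_max mm).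
  have hcl : cinf_hom (cl im : A -> Q) := cl_hom im (cong_max mm).
  have z0 : czero Q = cl im (czero A) by exact: (cl_cconst im (cong_max mm)).
  have o1 : cone Q = cl im (cone A) by exact: (cl_cconst im (cong_max mm)).
  have := hf Q (cl im : A -> Q) hcl.
  have kill : forall x, I x -> (cl im : A -> Q) x = czero Q.
    move=> x Ix; rewrite z0; apply: cl_eq; rewrite /eqv.
    have -> : csub x (czero A) = x by to_ring; ring.
    exact: hIm.
  move=> /(_ kill) H.
  have inv : exists g : Q, cmul ((cl im : A -> Q) f) g = cone Q.
    exists ((cl im : A -> Q) y); rewrite -(hom_cmul hcl) o1; apply: cl_eq; rewrite /eqv.
    have -> : csub (cmul f y) (cone A) = csub (czero A) h by rewrite hone; to_ring; ring.
    exact: JN.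
  move: (H inv); rewrite z0 o1 => /cl_eqv; rewrite /eqv.
  have -> : csub (cone A) (czero A) = cone A by to_ring; ring.
  by move=> /m1.
- by move=> f hf m mm _ hIm; exact: hf.
Qed.

Definition gm (m : nat) (t : RR^o) : RR^o := (t^-1) ^+ m * expR (- t^-1).
Definition phm (m : nat) (t : RR^o) : RR^o := if 0 < t then gm m t else 0.

Lemma gm_is_derive m (t : RR^o) : t != 0 ->
  is_derive t 1 (gm m) (- m%:R * gm m.+1 t + gm m.+2 t).
Proof.
move=> t0.
have hinv : is_derive t (1:RR^o) (fun s : RR^o => s^-1) (- t ^- 2 *: 1).
  by apply: is_deriveV.
have hpow := is_deriveX m hinv.
have hneg := is_deriveN hinv.
have hexp := @is_derive1_comp _ expR (fun s : RR^o => - s^-1) t _ _ (is_derive_expR (- t^-1)) hneg.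
have hprod := is_deriveM hpow hexp.
have -> : gm m = ((fun s : RR^o => s^-1) ^+ m) * (expR \o (fun s => - s^-1)).
  by apply/funext => s; rewrite /gm /= exprfctE.
apply: is_derive_eq.
rewrite /gm /= !exprfctE /=.
clear hpow hprod; case: m => [|m] /=.
  all: rewrite -!exprVn /GRing.scale /=; match goal with |- @eq _ ?a ?b => change (@eq RR a b) end; set y := t^-1; set E := expR (- y); rewrite !exprS ?expr0; ring.
Qed.

Lemma pow_le_exp n (s : RR) : 0 <= s -> s ^+ n.+1 <= n.+1`!%:R * expR s.
Proof.
move=> s0; have := expR_ge1Dxn n s0.
have hf : (0 : RR) < n.+1`!%:R by rewrite ltr0n fact_gt0.
move=> h; rewrite -ler_pdivrMl //.
rewrite mulrC; apply: le_trans h; rewrite lerDr; exact: ler01.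
Qed.

Lemma phm_lim m : (fun h : RR^o => h^-1 *: (phm m (h *: 1 + 0) - phm m 0)) @ 0^' --> (0 : RR^o).
Proof.
apply/cvgrPdist_le => e e0.
pose K : RR := (m.+2)`!%:R.
have K0 : 0 < K by rewrite ltr0n fact_gt0.
near=> h.
have hK : `|h| < e / K by near: h; apply: dnbhs0_lt; exact: divr_gt0.
rewrite /phm ltxx subr0 sub0r normrN addr0 /GRing.scale /= mulr1.
case: ifP => hpos; last by rewrite mulr0 normr0 ltW.
have hs : 0 < h^-1 by rewrite invr_gt0.
have B := pow_le_exp m.+1 (ltW hs).
rewrite /gm expRN ger0_norm; last first.
  by apply: mulr_ge0; [exact: ltW | apply: divr_ge0; [exact: exprn_ge0 (ltW hs)| exact: ltW (expR_gt0 _)]].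
have X0 := expR_gt0 h^-1.
rewrite mulrA -exprS ler_pdivrMr //.
move: hK; rewrite gtr0_norm // ltr_pdivlMr // => hK.
have hh : h^-1 * h = 1 by rewrite mulVf // gt_eqF.
move: B; rewrite exprS -/K => B.
set a := h^-1 ^+ m.+1 in B *; set s := h^-1 in hh hs B X0 *; set X := expR s in B X0 *.
have a0 : 0 <= a by rewrite exprn_ge0 // ltW.
nra.
Unshelve. all: by end_near. Qed.

Lemma phm_der m (t : RR^o) :
  derivable (phm m) t 1 /\ derive (phm m) t 1 = - m%:R * phm m.+1 t + phm m.+2 t.
Proof.
have [t0|t0|->] := ltgtP t 0.
- have nE : \forall s \near t, phm m s = cst 0 s.
    near=> s; rewrite /phm ifF //; apply/negbTE; rewrite -leNgt ltW //.
    by near: s; apply: lt_nbhsl.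
  split.
    apply: (near_eq_derivable (f := cst 0)); last exact: derivable_cst.
    by near=> s; rewrite (near nE s).
  rewrite (near_eq_derive _ nE) derive_cst /phm !ifF; last 2 first.
    by apply/negbTE; rewrite -leNgt ltW.
    by apply/negbTE; rewrite -leNgt ltW.
  by rewrite mulr0 addr0.
- have nE : \forall s \near t, phm m s = gm m s.
    near=> s; rewrite /phm ifT //.
    by near: s; apply: lt_nbhsr.
  have gd := gm_is_derive m (lt0r_neq0 t0).
  split.
    apply: (near_eq_derivable (f := gm m)); last exact: ex_derive.
    by near=> s; rewrite (near nE s).
  rewrite (near_eq_derive _ nE) derive_val /phm !ifT //.
- have hl := phm_lim m.
  split; first by apply/cvg_ex; exists 0.
  rewrite /phm ltxx mulr0 add0r.
  by apply: cvg_lim.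
Unshelve. all: by end_near. Qed.

Definition Phm m := fun v : 'rV[RR]_1 => (phm m (v 0 0) : RR^o).

Lemma Phm_comp m : Phm m = phm m \o coordf 0.
Proof. by []. Qed.

Lemma Phm_diff m x : differentiable (Phm m) x.
Proof.
rewrite Phm_comp; apply: differentiable_comp; first exact: diff_coordf.
by apply/derivable1_diffP; exact: (phm_der m _).1.
Qed.

Lemma Phm_pd m x (i : 'I_1) :
  derive (Phm m) x (delta_mx 0 i) = - m%:R * Phm m.+1 x + Phm m.+2 x.
Proof.
rewrite (ord1 i) deriveE; last exact: Phm_diff.
rewrite Phm_comp diff_comp; last 2 first.
- exact: diff_coordf.
- by apply/derivable1_diffP; exact: (phm_der m _).1.
rewrite /= -(deriveE _ (diff_coordf 0 x)) derive_coord mxE /=.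
rewrite (deriv1E (phm_der m _).1) /= derive1E (phm_der m _).2.
by rewrite scale1r.
Qed.

Lemma Ck_Phm k : forall m, Ck k (Phm m).
Proof.
elim: k => [|k IH] m /=.
  by move=> x; apply: differentiable_continuous; exact: Phm_diff.
split; first exact: Phm_diff.
move=> i; apply: (Ck_ext (f := fun x => - m%:R * Phm m.+1 x + Phm m.+2 x)).
  by move=> x; rewrite Phm_pd.
by apply: Ck_add => //; apply: Ck_mul => //; exact: Ck_cst.
Qed.

Lemma smooth_Phm m : smooth (Phm m).
Proof. by move=> k; exact: Ck_Phm. Qed.

(* the two-sided flat function psi(t) = exp(-1/|t|), psi(0)=0 *)
Definition psi (t : RR) : RR := phm 0 t + phm 0 (- t).
Definition Psi := fun v : 'rV[RR]_1 => (psi (v 0 0) : RR^o).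

Lemma smooth_Psi : smooth Psi.
Proof.
apply: (smooth_ext (f := fun v => Phm 0 v + Phm 0 (\row_(j < 1) (- v 0 0)))).
  by move=> v; rewrite /Psi /psi /Phm mxE.
apply: smooth_add; first exact: smooth_Phm.
apply: (smooth_comp (g := fun _ v => - v 0 0)); first exact: smooth_Phm.
move=> _; apply: smooth_opp; exact: smooth_proj.
Qed.

Lemma psi_ge0 t : 0 <= psi t.
Proof.
rewrite /psi /phm /gm; apply: addr_ge0; case: ifP => // _;
  by rewrite expr0 mul1r ltW // expR_gt0.
Qed.

Lemma psi_eq0 t : psi t = 0 -> t = 0.
Proof.
rewrite /psi /phm /gm; case: ifP => ha; case: ifP => hb; rewrite ?expr0 ?mul1r.
- by move: hb; rewrite oppr_gt0 => /(lt_trans ha); rewrite ltxx.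
- by rewrite addr0 => /eqP; rewrite gt_eqF // expR_gt0.
- by rewrite add0r => /eqP; rewrite gt_eqF // expR_gt0.
- move=> _; move: ha hb; rewrite oppr_gt0 => /negbT ha /negbT hb.
  by apply/eqP; rewrite eq_le -!leNgt in ha hb *; rewrite ha hb.
Qed.

Lemma psi_pos t : 0 < t -> psi t = expR (- t^-1).
Proof.
move=> t0; rewrite /psi /phm /gm; case: ifP => ha; last by rewrite t0 in ha.
case: ifP => hb; last by rewrite expr0 mul1r addr0.
by move: hb; rewrite oppr_gt0 => /(lt_trans t0); rewrite ltxx.
Qed.


Lemma krull (A : CinfRing) (I : A -> Prop) : ideal I -> ~ I (cone A) ->
  exists m, maximal_ideal m /\ forall x, I x -> m x.
Proof.
move=> iI nI1.
pose P := fun K : set A => ideal (I `|` K) /\ ~ (I `|` K) (cone A).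
have [|A0 [PA0 A0max]] := @Zorn_bigcup A P.
  move=> F FP Ftot.
  pose U := \bigcup_(X in F) X.
  have lift Z x : F Z -> (I `|` Z) x -> (I `|` U) x.
    by move=> FZ [Ix|Zx]; [left|right; exists Z].
  have FPi Z : F Z -> ideal (I `|` Z) by move=> /FP [].
  have FPn Z : F Z -> ~ (I `|` Z) (cone A) by move=> /FP [].
  split.
    split.
    - by left; exact: J0.
    - move=> a b [Ia|[X FX Xa]] [Ib|[Y FY Yb]].
      + by left; exact: JD.
      + by apply: (lift Y) => //; apply: (JD (FPi _ FY)); [left|right].
      + by apply: (lift X) => //; apply: (JD (FPi _ FX)); [right|left].
      + have [XY|YX] := Ftot _ _ FX FY.
          by apply: (lift Y) => //; apply: (JD (FPi _ FY)); right => //; exact: XY.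
        by apply: (lift X) => //; apply: (JD (FPi _ FX)); right => //; exact: YX.
    - move=> a b [Ib|[Y FY Yb]].
      + by left; exact: JM.
      + by apply: (lift Y) => //; apply: (JM (FPi _ FY)); right.
  move=> [I1|[X FX X1]]; first exact: nI1.
  by apply: (FPn _ FX); right.
exists (I `|` A0); split; last by move=> x Ix; left.
split; [exact: PA0.1 | exact: PA0.2 |].
move=> m' im' sub nm' a m'a.
apply: contrapT => na.
have hP : P m'.
  rewrite /P; have -> : I `|` m' = m'.
    apply/seteqP; split => x; last by move=> h; right.
    by case=> // Ix; apply: sub; left.
  by split.
apply: (A0max m') => //; split.
  by move=> x A0x; apply: sub; right.
by move=> /(_ a m'a) A0a; apply: na; right.
Qed.

Section FunRing.
Variable X : Type.
Definition FPhi n (f : 'rV[RR]_n -> RR) (a : 'I_n -> X -> RR) : X -> RR :=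
  fun t => f (\row_i a i t).
Lemma FPhi_proj n (i : 'I_n) (a : 'I_n -> X -> RR) : FPhi (fun x => x 0 i) a = a i.
Proof. by apply/funext => t; rewrite /FPhi mxE. Qed.
Lemma FPhi_comp n m (f : 'rV[RR]_m -> RR) (g : 'I_m -> 'rV[RR]_n -> RR) (a : 'I_n -> X -> RR) :
  smooth f -> (forall j, smooth (g j)) ->
  FPhi (fun x => f (\row_j g j x)) a = FPhi f (fun j => FPhi (g j) a).
Proof. by []. Qed.
Definition FunR : CinfRing := Build_CinfRing FPhi_proj FPhi_comp.

Lemma Fadd (a b : FunR) t : (cadd a b : X -> RR) t = a t + b t.
Proof. by rewrite /cadd /= /FPhi !mxE /args2. Qed.
Lemma Fsub (a b : FunR) t : (csub a b : X -> RR) t = a t - b t.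
Proof. by rewrite /csub /= /FPhi !mxE /args2. Qed.
Lemma Fmul (a b : FunR) t : (cmul a b : X -> RR) t = a t * b t.
Proof. by rewrite /cmul /= /FPhi !mxE /args2. Qed.
Lemma Fconst r t : (cconst FunR r : X -> RR) t = r.
Proof. by []. Qed.
Lemma Fzero t : (czero FunR : X -> RR) t = 0.
Proof. by []. Qed.
Lemma Fone t : (cone FunR : X -> RR) t = 1.
Proof. by []. Qed.
End FunRing.

Definition CRt := {h : RR -> RR | continuous h}.
Definition cst0 : CRt := exist _ (fun _ : RR => (0 : RR)) (@cst_continuous _ _ (0 : RR)).

Definition CPhi n (f : 'rV[RR]_n -> RR) (a : 'I_n -> CRt) : CRt :=
  match pselect (continuous (fun t => f (\row_i proj1_sig (a i) t))) with
  | left p => exist _ _ p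
  | right _ => cst0
  end.

Lemma CR_ext (u v : CRt) : proj1_sig u =1 proj1_sig v -> u = v.
Proof. by case: u => u hu; case: v => v hv /= /funext uv; apply: eq_exist. Qed.

Lemma CPhi_val n (f : 'rV[RR]_n -> RR) a : continuous (fun t => f (\row_i proj1_sig (a i) t)) ->
  proj1_sig (CPhi f a) = fun t => f (\row_i proj1_sig (a i) t).
Proof. by move=> h; rewrite /CPhi; case: pselect. Qed.

Lemma cont_comp n (f : 'rV[RR]_n -> RR) (a : 'I_n -> CRt) : smooth f ->
  continuous (fun t => f (\row_i proj1_sig (a i) t)).
Proof.
move=> sf x.
apply: (@continuous_comp _ _ _ (fun t => \row_i proj1_sig (a i) t) f x).
  by apply: row_cont => i; exact: (proj2_sig (a i)).
exact: (Ck_cont (sf 0%N)).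
Qed.

Lemma CPhi_sval n (f : 'rV[RR]_n -> RR) a : smooth f ->
  proj1_sig (CPhi f a) = fun t => f (\row_i proj1_sig (a i) t).
Proof. by move=> sf; apply: CPhi_val; exact: cont_comp. Qed.

Lemma CPhi_proj n (i : 'I_n) (a : 'I_n -> CRt) : CPhi (fun x => x 0 i) a = a i.
Proof.
apply: CR_ext => t; rewrite CPhi_sval; last exact: smooth_proj.
by rewrite mxE.
Qed.

Lemma CPhi_comp n m (f : 'rV[RR]_m -> RR) (g : 'I_m -> 'rV[RR]_n -> RR) (a : 'I_n -> CRt) :
  smooth f -> (forall j, smooth (g j)) ->
  CPhi (fun x => f (\row_j g j x)) a = CPhi f (fun j => CPhi (g j) a).
Proof.
move=> sf sg; apply: CR_ext => t.
rewrite CPhi_sval; last exact: smooth_comp.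
rewrite CPhi_sval //; congr f; apply/rowP => j; rewrite !mxE.
by rewrite CPhi_sval.
Qed.

Definition CR : CinfRing := Build_CinfRing CPhi_proj CPhi_comp.

Lemma Cadd (a b : CR) t : proj1_sig (cadd a b) t = proj1_sig a t + proj1_sig b t.
Proof. by rewrite /cadd /= CPhi_sval ?mxE /args2 //; exact: smooth_a2. Qed.
Lemma Csub (a b : CR) t : proj1_sig (csub a b) t = proj1_sig a t - proj1_sig b t.
Proof. by rewrite /csub /= CPhi_sval ?mxE /args2 //; exact: smooth_s2. Qed.
Lemma Cmul (a b : CR) t : proj1_sig (cmul a b) t = proj1_sig a t * proj1_sig b t.
Proof. by rewrite /cmul /= CPhi_sval ?mxE /args2 //; exact: smooth_m2. Qed.
Lemma Cconst r t : proj1_sig (cconst CR r) t = r.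
Proof. by rewrite /cconst /= CPhi_sval //; exact: smooth_cst. Qed.
Lemma Cpow (a : CR) k t : proj1_sig (cpow a k) t = proj1_sig a t ^+ k.
Proof. elim: k => [|k IH] /=; first by rewrite Cconst. by rewrite Cmul IH exprS. Qed.


Definition I3 (h : FunR nat) : Prop := exists N, forall n, (N <= n)%N -> h n = 0.

Lemma I3_ideal : ideal I3.
Proof.
split.
- by exists 0%N => n _; rewrite Fzero.
- move=> a b [N1 h1] [N2 h2]; exists (maxn N1 N2) => n hn.
  rewrite Fadd h1 ?h2 ?addr0 //.
    by apply: leq_trans hn; exact: leq_maxr.
  by apply: leq_trans hn; exact: leq_maxl.
- by move=> a b [N h]; exists N => n hn; rewrite Fmul h // mulr0.
Qed.

Lemma I3_n1 : ~ I3 (cone (FunR nat)).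
Proof. by move=> [N h]; have := h N (leqnn N); rewrite Fone => /eqP; rewrite oner_eq0. Qed.

Lemma no_res (m : FunR nat -> Prop) : maximal_ideal m -> (forall x, I3 x -> m x) ->
  residue_R m -> False.
Proof.
move=> [im m1 _] hI res.
pose a : FunR nat := fun n : nat => (n%:R : RR).
have [r hr] := res a.
pose hh := csub a (cconst (FunR nat) r).
have hhE n : (hh : nat -> RR) n = n%:R - r by rewrite /hh Fsub.
pose e : FunR nat := fun n : nat => if (n%:R - r == 0) then (1 : RR) else 0.
have Ie : I3 e.
  have [N _ hN] := nbhs_infty_gtr r.
  exists N => n hn; rewrite /e ifF //; apply/negbTE.
  by rewrite subr_eq0 gt_eqF //; exact: hN.
pose u : FunR nat := fun n : nat => if (n%:R - r == 0) then (0 : RR) else (n%:R - r)^-1.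
have E1 : cone (FunR nat) = cadd e (cmul u hh).
  apply/funext => n; rewrite Fadd Fmul Fone hhE /e /u.
  by case: eqP => [->|h]; [rewrite mul0r addr0 | rewrite add0r mulVf //; apply/eqP].
apply: m1; rewrite E1; apply: JD => //; first exact: hI.
exact: JM.
Qed.

Lemma CE3 : exists (A : CinfRing) (I : A -> Prop), ideal I /\ ~ incl_pred (jacR I) (jac I).
Proof.
exists (FunR nat), I3; split; first exact: I3_ideal.
move=> H.
have [m [mm hIm]] := krull I3_ideal I3_n1.
have : jacR I3 (cone (FunR nat)).
  by move=> m' mm' res hI'; exfalso; exact: (no_res mm' hI' res).
move=> /H /(_ m mm hIm); by case: mm.
Qed.

Lemma id_cont : continuous (fun t : RR => t).
Proof. by move=> x; exact: cvg_id. Qed.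

Definition idx : CR := exist _ (fun t : RR => t) id_cont.

Definition I2 (g : CR) : Prop := \forall t \near (0:RR), proj1_sig g t = 0.

Lemma I2_ideal : ideal I2.
Proof.
split.
- by near=> t; rewrite Cconst.
- move=> a b ha hb; apply: filterS2 ha hb => t h1 h2.
  by rewrite Cadd h1 h2 addr0.
- by move=> a b hb; apply: filterS hb => t h; rewrite Cmul h mulr0.
Unshelve. all: by end_near. Qed.

Lemma cont_at0 (v : RR -> RR) : continuous v -> forall eps : RR, 0 < eps ->
  \forall t \near (0:RR), `|v 0 - v t| < eps.
Proof.
move=> vc eps eps0.
have h0 : v x @[x --> (0:RR)] --> v 0 := vc 0.
exact: (@cvgrPdist_lt RR RR^o RR (nbhs (0:RR)) _ v (v 0)).1 h0 eps eps0.
Qed.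

Lemma sq_bound (a b d : RR) : 0 <= a -> 0 < b -> b <= d + a -> d < b / 2 -> b * b / 4 < a * a.
Proof.
move=> a0 b0 h1 h2.
have ha : b / 2 < a by lra.
have hb2 : 0 < b / 2 by lra.
have := ltr_pM (ltW hb2) (ltW hb2) ha ha. lra.
Qed.

Lemma CE2_jac : jac I2 idx.
Proof.
move=> m mm hIm; have [im m1 mmax] := mm.
have key : forall g, m g -> proj1_sig g 0 = 0.
  move=> g mg; apply: contrapT => /eqP g0.
  pose v := proj1_sig g.
  have gc : continuous v := proj2_sig g.
  pose c := v 0 * v 0 / 4.
  have c0 : 0 < c by rewrite /c divr_gt0 // lt0r mulf_neq0 //= -expr2 sqr_ge0.
  pose sq := fun t => v t * v t.
  have sqc : continuous sq by move=> x; apply: continuousM; exact: gc.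
  pose mx := fun t => Num.max (sq t) c.
  have mx0 t : 0 < mx t by rewrite /mx lt_max c0 orbT.
  have mxc : continuous mx.
    move=> x; apply: (@continuous_max _ _ sq (fun _ => c) x); first exact: sqc.
    exact: cst_continuous.
  pose hf := fun t => v t / mx t.
  have hfc : continuous hf.
    move=> x; apply: continuousM; first exact: gc.
    by apply: continuousV; [rewrite gt_eqF|exact: mxc].
  pose hc : CR := exist _ hf hfc.
  pose k := csub (cone CR) (cmul g hc).
  have Ik : I2 k.
    have e0 : 0 < `|v 0| / 2 by rewrite divr_gt0 // normr_gt0.
    apply: filterS (cont_at0 gc e0) => t ht.
    have hsq : c < sq t.
      have tri : `|v 0| <= `|v 0 - v t| + `|v t|.
        by rewrite -[X in `|X|](subrK (v t)) ler_normD.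
      have eq1 : sq t = `|v t| * `|v t| by rewrite -normrM ger0_norm // /sq -expr2 sqr_ge0.
      have eq2 : c = `|v 0| * `|v 0| / 4 by rewrite -normrM ger0_norm // -expr2 sqr_ge0.
      rewrite eq1 eq2.
      have a0 := normr_ge0 (v t); have b0 : 0 < `|v 0| by rewrite normr_gt0.
      exact: sq_bound a0 b0 tri ht.
    have vt0 : v t != 0.
      by apply/eqP => vt; move: hsq; rewrite /sq vt mul0r => /(lt_trans c0); rewrite ltxx.
    rewrite /k Csub Cmul Cconst /= /hf /mx max_l; last exact: ltW.
    by rewrite /sq mulrA mulfV // ?subrr // mulf_neq0.
  have E1 : cone CR = cadd k (cmul g hc).
    by apply: CR_ext => t; rewrite Cadd /k Csub Cconst subrK.
  apply: m1; rewrite E1; apply: JD => //; first exact: hIm.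
  exact: JMr.
have m0 : ideal (fun g : CR => proj1_sig g 0 = 0).
  split.
  - by rewrite Cconst.
  - by move=> a b ha hb; rewrite Cadd ha hb addr0.
  - by move=> a b hb; rewrite Cmul hb mulr0.
have n10 : ~ (proj1_sig (cone CR) 0 = 0) by rewrite Cconst => /eqP; rewrite oner_eq0.
by apply: (mmax _ m0 key n10).
Qed.

Definition J2 (h : FunR RR) : Prop := \forall t \near (0:RR)^'+, h t = 0.

Lemma J2_ideal : ideal J2.
Proof.
split.
- by near=> t; rewrite Fzero.
- move=> a b ha hb; apply: filterS2 ha hb => t h1 h2.
  by rewrite Fadd h1 h2 addr0.
- by move=> a b hb; apply: filterS hb => t h; rewrite Fmul h mulr0.
Unshelve. all: by end_near. Qed.

Lemma J2_cong n (f : 'rV[RR]_n -> RR) (a b : 'I_n -> FunR RR) : smooth f ->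
  (forall i, J2 (csub (a i) (b i))) -> J2 (csub (Phi f a) (Phi f b)).
Proof.
move=> _ hab.
have H := filter_forall (at_right_proper_filter (0:RR)) hab.
apply: filterS H => t H; rewrite Fsub /= /FPhi.
have -> : \row_i a i t = \row_i b i t.
  by apply/rowP => i; rewrite !mxE; apply/eqP; rewrite -subr_eq0; apply/eqP; have := H i; rewrite Fsub.
by rewrite subrr.
Qed.

Definition QB := QR J2_ideal J2_cong.
Definition phi2 (g : CR) : QB := cl J2_ideal (proj1_sig g : FunR RR).

Lemma phi2_hom : cinf_hom phi2.
Proof.
move=> n f a sf; rewrite /phi2 /= CPhi_sval //.
exact: (cl_hom J2_ideal J2_cong (fun i => (proj1_sig (a i) : FunR RR)) sf).
Qed.

Lemma CE2_not : ~ cinf_rad I2 idx.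
Proof.
move=> H.
have z0 : czero QB = cl J2_ideal (czero (FunR RR)) by exact: (cl_cconst J2_ideal J2_cong).
have o1 : cone QB = cl J2_ideal (cone (FunR RR)) by exact: (cl_cconst J2_ideal J2_cong).
have kill : forall x, I2 x -> phi2 x = czero QB.
  move=> x Ix; rewrite z0 /phi2; apply: cl_eq; rewrite /eqv /J2.
  near=> t; rewrite Fsub Fzero subr0.
  near: t; apply: cvg_within; exact: Ix.
have inv : exists g : QB, cmul (phi2 idx) g = cone QB.
  exists (cl J2_ideal ((fun t : RR => t^-1) : FunR RR)).
  rewrite /phi2 -(hom_cmul (cl_hom J2_ideal J2_cong)) o1; apply: cl_eq; rewrite /eqv /J2.
  near=> t; rewrite Fsub Fmul Fone /= mulfV ?subrr //.
move: (H QB phi2 phi2_hom kill inv); rewrite z0 o1 => /cl_eqv; rewrite /eqv /J2 => h.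
have : \forall t \near (0:RR)^'+, False.
  by apply: filterS h => t; rewrite Fsub Fone Fzero subr0 => /eqP; rewrite oner_eq0.
by move=> /filter_ex [].
Unshelve. all: by end_near. Qed.

Lemma CE2 : exists (A : CinfRing) (I : A -> Prop), ideal I /\ ~ incl_pred (jac I) (cinf_rad I).
Proof.
exists CR, I2; split; first exact: I2_ideal.
move=> H; apply: CE2_not; exact: H _ CE2_jac.
Qed.


Definition psic : CR := CPhi Psi (fun _ : 'I_1 => idx).
Lemma psicE t : proj1_sig psic t = psi t.
Proof. by rewrite /psic CPhi_sval; [rewrite /Psi mxE | exact: smooth_Psi]. Qed.

Definition I1 (h : CR) : Prop := exists c : CR, forall t, proj1_sig h t = proj1_sig c t * psi t.

Lemma I1_ideal : ideal I1.
Proof.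
split.
- by exists (czero CR) => t; rewrite !Cconst mul0r.
- move=> a b [c1 h1] [c2 h2]; exists (cadd c1 c2) => t.
  by rewrite !Cadd h1 h2 mulrDl.
- by move=> a b [c h]; exists (cmul a c) => t; rewrite !Cmul h mulrA.
Qed.

Lemma CE1_rad : cinf_rad I1 idx.
Proof.
move=> B phi hphi kill [u hu].
have Ipsi : I1 psic.
  by exists (cone CR); move=> t; rewrite psicE Cconst mul1r.
have p0 : Phi Psi (fun _ : 'I_1 => phi idx) = czero B.
  by rewrite -(kill psic Ipsi) /psic [RHS]hphi //; exact: smooth_Psi.
pose w2 := args2 (phi idx) u.
pose PsiR := fun v : 'rV[RR]_2 => Psi (\row_(j < 1) v 0 0).
pose E := fun v : 'rV[RR]_2 => (v 0 0 * v 0 1 - 1 : RR^o).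
pose S := fun v => PsiR v + E v * E v.
have sPsiR : smooth PsiR.
  apply: (smooth_comp (g := fun _ v => v 0 0)); first exact: smooth_Psi.
  by move=> _; exact: smooth_proj.
have sE : smooth E.
  by apply: smooth_sub; [apply: smooth_mul; exact: smooth_proj | exact: smooth_cst].
have sS : smooth S by apply: smooth_add => //; exact: smooth_mul.
have S0 v : S v != 0.
  apply/negP => /eqP; rewrite /S /PsiR /Psi mxE => /eqP.
  have hp := psi_ge0 (v 0 0).
  have hE : 0 <= E v * E v by rewrite -expr2 sqr_ge0.
  rewrite paddr_eq0 // => /andP[/eqP /psi_eq0 v0 /eqP].
  by rewrite /E v0 mul0r sub0r mulrNN mulr1 => /eqP; rewrite oner_eq0.
have key : cone B = cmul (Phi S w2) (Phi (fun v => (S v)^-1) w2).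
  rewrite -Phi_mulE //; last exact: smooth_inv.
  rewrite coneE -(Phi_cstE _ w2); apply: Phi_ext => v.
  by rewrite mulfV.
have hP : Phi PsiR w2 = czero B.
  rewrite /PsiR (Phi_comp (g := fun _ v => v 0 0)); [|exact: smooth_Psi|by move=> _; exact: smooth_proj].
  by rewrite -p0; congr (Phi Psi _); apply/funext => j; rewrite Phi_proj.
have hE : Phi E w2 = czero B.
  rewrite /E Phi_subE //; last exact: smooth_cst.
    rewrite Phi_mulE; try exact: smooth_proj.
    by rewrite !Phi_proj Phi_cstE /w2 /args2 /= hu -coneE; to_ring; ring.
  by apply: smooth_mul; exact: smooth_proj.
move: key; rewrite /S Phi_addE //; last exact: smooth_mul.
by rewrite Phi_mulE // hP hE => ->; to_ring; ring.
Qed.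

Lemma CE1_nil : ~ nilrad I1 idx.
Proof.
move=> [k [k1 [c hc]]].
pose cv := proj1_sig c.
have cc : continuous cv := proj2_sig c.
pose M : RR := `|cv 0| + 1.
pose K : RR := (k.+1)`!%:R.
have M0 : 0 < M by rewrite /M ltr_pwDr // ltr01.
have K0 : 0 < K by rewrite ltr0n fact_gt0.
have [t [t0 [h1 h2]]] : exists t : RR, 0 < t /\ `|cv 0 - cv t| < 1 /\ t < (2 * M * K)^-1.
  apply: (filter_ex (F := (0:RR)^'+)); near=> t; split.
    by near: t; exact: nbhs_right_gt.
  split.
    by near: t; apply: cvg_within; exact: (cont_at0 cc ltr01).
  by near: t; apply: nbhs_right_lt; rewrite invr_gt0 !mulr_gt0.
have hct : `|cv t| <= M.
  have e : cv t = cv 0 - (cv 0 - cv t) by rewrite opprB addrC subrK.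
  rewrite e; apply: le_trans (ler_normB _ _) _.
  by rewrite /M lerD2l ltW.
have := hc t; rewrite Cpow psi_pos // expRN /= => ht.
have s0 : 0 < t^-1 by rewrite invr_gt0.
have B := pow_le_exp k (ltW s0).
have X0 := expR_gt0 t^-1.
have hPX : t ^+ k * expR t^-1 <= M.
  by rewrite ht -mulrA mulVf ?gt_eqF // mulr1; apply: le_trans hct; exact: ler_norm.
have hQ : t^-1 ^+ k.+1 * (t ^+ k * t) = 1.
  by rewrite -exprSr -exprMn mulVf ?gt_eqF // expr1n.
have P0 : 0 <= t ^+ k * t by rewrite mulr_ge0 // ?exprn_ge0 // ltW.
have e1 := ler_wpM2r P0 B.
have e2 := ler_wpM2r (ltW (mulr_gt0 K0 t0)) hPX.
have h2' : t * (2 * M * K) < 1.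
  by rewrite -ltr_pdivlMr ?mulr_gt0 // div1r.
move: e1 e2 h2' hQ; rewrite -/K.
set Q := t^-1 ^+ k.+1; set P := t ^+ k; set X := expR t^-1 => e1 e2 h2' hQ.
nra.
Unshelve. all: by end_near. Qed.

Lemma CE1 : exists (A : CinfRing) (I : A -> Prop), ideal I /\ ~ incl_pred (cinf_rad I) (nilrad I).
Proof.
exists CR, I1; split; first exact: I1_ideal.
move=> H; apply: CE1_nil; exact: H _ CE1_rad.
Qed.

Theorem proposition2p2 :
  (forall (A : CinfRing) (I : A -> Prop), ideal I ->
     [/\ incl_pred (nilrad I) (cinf_rad I),
         incl_pred (cinf_rad I) (jac I)
       & incl_pred (jac I) (jacR I)]) /\
  [/\ (exists (A : CinfRing) (I : A -> Prop),
          ideal I /\ ~ incl_pred (cinf_rad I) (nilrad I)),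
      (exists (A : CinfRing) (I : A -> Prop),
          ideal I /\ ~ incl_pred (jac I) (cinf_rad I))
    & (exists (A : CinfRing) (I : A -> Prop),
          ideal I /\ ~ incl_pred (jacR I) (jac I))].
Proof.
split; first exact: part1.
split; [exact: CE1 | exact: CE2 | exact: CE3].
Qed.
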